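(* Let $L$ be a finite extension of the semifield $\mathbb{B}$. Then $L=\mathbb{B}$ (the embedding $\mathbb{B}\to L$ is surjective).
   Context: $\mathbb{B}=\{0,1\}$ is the semifield with $x+0=0+x=x$, $1+1=1$, and the obvious multiplication. A semifield is a commutative semiring in which every nonzero element is a unit. An extension of a semifield $K$ is a semifield $L$ with an injective homomorphism $K\to L$; it is finite if $L$ is a finitely generated $K$-semimodule. *)

(* Defs.v *)
From HB Require Import structures.
From mathcomp Require Import all_boot all_algebra.
Set Implicit Arguments. Unset Strict Implicit. Unset Printing Implicit Defensive.
Import GRing.Theory.
Local Open Scope ring_scope.

(* The Boolean semifield B = {0,1}: addition is "or" (so 1 + 1 = 1),
   multiplication is "and". We use a fresh alias of bool to avoid
   clashing with any other algebraic structure on bool. *)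
Definition Bsf : Type := bool.
HB.instance Definition _ := Choice.on Bsf.

Lemma Bsf_addA : associative (orb : Bsf -> Bsf -> Bsf). Proof. exact: orbA. Qed.
Lemma Bsf_addC : commutative (orb : Bsf -> Bsf -> Bsf). Proof. exact: orbC. Qed.
Lemma Bsf_add0 : left_id (false : Bsf) orb. Proof. by []. Qed.
HB.instance Definition _ := GRing.isNmodule.Build Bsf Bsf_addA Bsf_addC Bsf_add0.

Lemma Bsf_mulA : associative (andb : Bsf -> Bsf -> Bsf). Proof. exact: andbA. Qed.
Lemma Bsf_mulC : commutative (andb : Bsf -> Bsf -> Bsf). Proof. exact: andbC. Qed.
Lemma Bsf_mul1 : left_id (true : Bsf) andb. Proof. by []. Qed.
Lemma Bsf_mulDl : left_distributive (andb : Bsf -> Bsf -> Bsf) (+%R : Bsf -> Bsf -> Bsf).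
Proof. by case; case; case. Qed.
Lemma Bsf_mul0 : left_zero (0 : Bsf) andb. Proof. by []. Qed.
Lemma Bsf_one_neq0 : (true : Bsf) != 0. Proof. by []. Qed.
HB.instance Definition _ := GRing.Nmodule_isComNzSemiRing.Build Bsf
  Bsf_mulA Bsf_mulC Bsf_mul1 Bsf_mulDl Bsf_mul0 Bsf_one_neq0.

Definition semifield (L : comPzSemiRingType) : Prop :=
  forall x : L, x != 0 -> exists y : L, x * y = 1.

(* L is a finitely generated K-semimodule, the K-action being given by
   the homomorphism f : K -> L (k . x := f k * x). *)
Definition finite_ext (K L : comPzSemiRingType) (f : {rmorphism K -> L}) : Prop :=
  exists (n : nat) (v : 'I_n -> L),
    forall x : L, exists c : 'I_n -> K, x = \sum_(i < n) f (c i) * v i.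

Lemma Bsf_semifield : semifield Bsf.
Proof. by case=> // _; exists true. Qed.
Lemma Bsf_1p1 : (1 + 1 : Bsf) = 1. Proof. by []. Qed.

(* Main.v *)
Require Import Defs.
From HB Require Import structures.
From mathcomp Require Import all_boot all_algebra.
Local Open Scope ring_scope.
Import GRing.Theory.

Theorem mainTheorem10 (L : comPzSemiRingType) (f : {rmorphism Bsf -> L}) :
  semifield L -> injective f -> finite_ext f ->
  forall y : L, exists b : Bsf, f b = y.
Proof.
move=> sf finj [n [v hv]] y.
have h11 : (1 + 1 : L) = 1.
  by rewrite -(rmorph1 f) -rmorphD.
have idem (a : L) : a + a = a by rewrite -{1 2}[a]mulr1 -mulrDr h11 mulr1.
have zsf (a b : L) : a + b = 0 -> a = 0.
  by move=> e; rewrite -[a]addr0 -e addrA idem e.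
have h10 : (1 : L) != 0.
  apply/negP=> /eqP e; have : f true = f false by rewrite rmorph0 rmorph1.
  by move/finj.
have [y0|ynz] := eqVneq y 0.
  by exists false; rewrite rmorph0 y0.
exists true; rewrite rmorph1.
pose g (c : {ffun 'I_n -> Bsf}) : L := \sum_(i < n) f (c i) * v i.
have ing (a : L) : a \in codom g.
  have [c hc] := hv a.
  have -> : a = g (finfun c) by rewrite hc /g; apply: eq_bigr => i _; rewrite ffunE.
  exact: codom_f.
pose N := #|{ffun 'I_n -> Bsf}|.+1.
pose s := [seq y ^+ k | k <- iota 0 N].
have nu : ~~ uniq s.
  apply/negP=> u.
  have := uniq_leq_size u (fun a _ => ing a).
  rewrite size_map size_iota size_codom /N.
  by rewrite !card_ffun ltnn.
have [i [j [lij ljs eij]]] := uniqPn 0 nu.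
rewrite size_map size_iota in ljs.
rewrite !(nth_map 0) ?size_iota ?(ltn_trans lij) // !nth_iota ?(ltn_trans lij) //
  !add0n in eij.
have [z hz] := sf y ynz.
have [m em] : exists m, j = (i + m.+1)%N.
  by exists (j - i.+1)%N; rewrite addnS -addSn subnKC.
have ym : y ^+ m.+1 = 1.
  have e1 : y ^+ i * z ^+ i = 1 by rewrite -exprMn hz expr1n.
  by rewrite -[LHS]mul1r -e1 mulrAC -exprD -em -eij e1.
pose S := \sum_(k < m.+1) y ^+ k.
have Sy : S * y = S.
  have e1 : S * y = \sum_(k < m) y ^+ k.+1 + 1.
    rewrite /S mulr_suml big_ord_recr /= -exprSr ym.
    by congr (_ + _); apply: eq_bigr => k _; rewrite -exprSr.
  have e2 : S = 1 + \sum_(k < m) y ^+ k.+1 by rewrite /S big_ord_recl expr0.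
  rewrite e1 [in RHS]e2; exact: (@addrC L).
have Snz : S != 0.
  apply/negP=> /eqP e; move: e; rewrite /S big_ord_recl expr0 => /zsf e.
  by rewrite e eqxx in h10.
have [t ht] := sf S Snz.
by rewrite -[y]mul1r -ht mulrAC Sy.
Qed.
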